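(* For every proper $S_0$-invariant subgroup $H$ of $E$, the set $\mathcal C_H=\{p\in P : \pi(w(p,\ell))\in H \text{ for some labelling } \ell \text{ of } p\}$ is a simplifiable hyperoctahedral category of partitions.
   Context: A partition $p\in P(k,l)$ ($k,l\ge 0$) is a partition of the disjoint union of $k$ ordered upper points $1,\dots,k$ and $l$ ordered lower points $1',\dots,l'$ into nonempty disjoint subsets called blocks; $P=\bigcup_{k,l}P(k,l)$. Operations on partitions: the tensor product $p\otimes q$ (horizontal juxtaposition, $q$ placed to the right of $p$); the composition of $p\in P(k,l)$ with $q\in P(l,m)$ (stack $p$ on top of $q$, identify the lower points of $p$ with the upper points of $q$, merge blocks connected through these middle points, then erase the middle points and any block lying entirely among them), giving a partition in $P(k,m)$; the involution $p^*$ (reflection of $p$ upside down); and rotation (moving the leftmost, resp. rightmost, point of one row to the leftmost, resp. rightmost, position of the other row, keeping the blocks). A category of partitions is a subset $\mathcal C\subseteq P$ containing the pair partition $\sqcap\in P(0,2)$ (one block consisting of two lower points) and the identity partition $|\in P(1,1)$ (one block $\{1,1'\}$), and closed under these four operations. Special partitions: the four block $b_4\in P(0,4)$ (one block of four lower points); the double singleton $\uparrow\otimes\uparrow\in P(0,2)$ (two one-point blocks); the pair positioner $\rho\in P(3,3)$ with blocks $\{1,2,2',3'\}$ and $\{3,1'\}$. A category of partitions $\mathcal C$ is hyperoctahedral if $b_4\in\mathcal C$ and $\uparrow\otimes\uparrow\notin\mathcal C$; it is simplifiable hyperoctahedral if moreover $\rho\in\mathcal C$. Let $L=\{a_1,a_2,\dots\}$,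 $\mathbb F_L$ the free group on $L$, $G=\mathbb Z_2^{*\infty}$ the free product of countably many copies of $\mathbb Z/2\mathbb Z$ generated by $a_1,a_2,\dots$ with $a_i^2=e$, and $\pi:\mathbb F_L\to G$ the canonical surjection. A labelling $\ell$ of a partition $p$ assigns pairwise distinct letters of $L$ to the blocks of $p$; $w(p,\ell)\in\mathbb F_L$ is the word obtained by reading the labels of the points of $p$ starting at the leftmost upper point, going through the upper row from left to right and then through the lower row from right to left. $E\le G$ is the subgroup of elements of even length. $S_0\subseteq\mathrm{End}(G)$ is the subsemigroup generated by: (1) for every $n\in\mathbb N$ and every choice of indices $i(1),\dots,i(n)$, the endomorphism with $a_k\mapsto a_{i(k)}$ for $1\le k\le n$ and $a_k\mapsto a_k$ for $k>n$; (2) for every $k$, the conjugation $w\mapsto a_kwa_k$. A subgroup $H$ is $S_0$-invariant if $\phi(H)\subseteq H$ for all $\phi\in S_0$. *)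

(* Defs.v *)
From mathcomp Require Import all_boot.
Set Implicit Arguments. Unset Strict Implicit. Unset Printing Implicit Defensive.

(* Partitions.  The points of a diagram in P(k,l): upper points 'I_k   *)
(* (left to right), lower points 'I_l (left to right).                 *)
(* A (raw) diagram is a boolean relation on its points; it is a        *)
(* partition when this relation is an equivalence relation (its        *)
(* classes are the blocks).                                            *)
Definition pt (k l : nat) : finType := ('I_k + 'I_l)%type.
Definition prel (k l : nat) := {ffun pt k l * pt k l -> bool}.

Definition is_partition k l (p : prel k l) : bool :=
  [&& [forall x, p (x, x)],
      [forall x, forall y, p (x, y) ==> p (y, x)] &
      [forall x, forall y, forall z, p (x, y) ==> p (y, z) ==> p (x, z)]].

Definition prel_of_cls k l (c : pt k l -> nat) : prel k l :=
  [ffun xy => c xy.1 == c xy.2].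

Definition pullback k l k' l' (f : pt k' l' -> pt k l) (p : prel k l)
  : prel k' l' := [ffun xy => p (f xy.1, f xy.2)].

(* tensor product: q placed to the right of p *)
Definition tsplit k l k' l' (x : pt (k + k') (l + l'))
  : (pt k l + pt k' l')%type :=
  match x with
  | inl i => match split i with inl a => inl (inl a) | inr b => inr (inl b) end
  | inr j => match split j with inl a => inl (inr a) | inr b => inr (inr b) end
  end.

Definition tensor k l k' l' (p : prel k l) (q : prel k' l')
  : prel (k + k') (l + l') :=
  [ffun xy : pt (k + k') (l + l') * pt (k + k') (l + l') => match @tsplit k l k' l' xy.1, @tsplit k l k' l' xy.2 with
              | inl a, inl b => p (a, b)
              | inr a, inr b => q (a, b)
              | _, _ => false
              end].

Definition swap_pt k l (x : pt l k) : pt k l :=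
  match x with inl i => inr i | inr j => inl j end.
Definition star k l (p : prel k l) : prel l k := pullback (@swap_pt k l) p.

(* composition: p on top of q, middle points identified, blocks merged
   through the middle points (transitive closure), middle points erased *)
Section Comp.
Variables (k l m : nat).
Definition cpt : finType := (('I_k + 'I_l) + 'I_m)%type.
Definition c_top (u : cpt) : option (pt k l) :=
  match u with inl v => Some v | inr _ => None end.
Definition c_bot (u : cpt) : option (pt l m) :=
  match u with
  | inl (inl _) => None | inl (inr j) => Some (inl j) | inr t => Some (inr t)
  end.
Definition c_edge (p : prel k l) (q : prel l m) : rel cpt :=
  fun u v =>
    (match c_top u, c_top v with Some x, Some y => p (x, y) | _, _ => false end)
    || (match c_bot u, c_bot v with Some x, Some y => q (x, y) | _, _ => false end).
Definition c_out (x : pt k m) : cpt :=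
  match x with inl i => inl (inl i) | inr t => inr t end.
Definition comp (p : prel k l) (q : prel l m) : prel k m :=
  [ffun xy => connect (c_edge p q) (c_out xy.1) (c_out xy.2)].
End Comp.

(* leftmost upper point -> leftmost lower point : P(k+1,l) -> P(k,l+1) *)
Definition rotUL_map k l (x : pt k l.+1) : pt k.+1 l :=
  match x with
  | inl i => inl (lift (@ord0 k) i)
  | inr j => match unlift (@ord0 l) j with None => inl ord0 | Some j' => inr j' end
  end.
Definition rotUL k l (p : prel k.+1 l) : prel k l.+1 := pullback (@rotUL_map k l) p.

(* leftmost lower point -> leftmost upper point : P(k,l+1) -> P(k+1,l) *)
Definition rotLU_map k l (x : pt k.+1 l) : pt k l.+1 :=
  match x with
  | inr j => inr (lift (@ord0 l) j)
  | inl i => match unlift (@ord0 k) i with None => inr ord0 | Some i' => inl i' end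
  end.
Definition rotLU k l (p : prel k l.+1) : prel k.+1 l := pullback (@rotLU_map k l) p.

(* rightmost upper point -> rightmost lower point : P(k+1,l) -> P(k,l+1) *)
Definition rotUR_map k l (x : pt k l.+1) : pt k.+1 l :=
  match x with
  | inl i => inl (lift (@ord_max k) i)
  | inr j => match unlift (@ord_max l) j with None => inl ord_max | Some j' => inr j' end
  end.
Definition rotUR k l (p : prel k.+1 l) : prel k l.+1 := pullback (@rotUR_map k l) p.

(* rightmost lower point -> rightmost upper point : P(k,l+1) -> P(k+1,l) *)
Definition rotLR_map k l (x : pt k.+1 l) : pt k l.+1 :=
  match x with
  | inr j => inr (lift (@ord_max l) j)
  | inl i => match unlift (@ord_max k) i with None => inr ord_max | Some i' => inl i' end
  end.
Definition rotLR k l (p : prel k l.+1) : prel k.+1 l := pullback (@rotLR_map k l) p.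

Definition pairP : prel 0 2 := [ffun _ => true].
Definition idP : prel 1 1 := [ffun _ => true].
Definition b4 : prel 0 4 := [ffun _ => true].
Definition dsingleton : prel 0 2 := [ffun xy => xy.1 == xy.2].
(* pair positioner: blocks {1,2,2',3'} and {3,1'} *)
Definition rho_cls (x : pt 3 3) : nat :=
  match x with
  | inl i => if val i == 2 then 1 else 0
  | inr j => if val j == 0 then 1 else 0
  end.
Definition rho : prel 3 3 := prel_of_cls rho_cls.

Definition pcat := forall k l, prel k l -> Prop.

Definition is_category (C : pcat) : Prop :=
  [/\ (forall k l (p : prel k l), C k l p -> is_partition p),
      C 0 2 pairP /\ C 1 1 idP,
      (forall k l k' l' (p : prel k l) (q : prel k' l'),
          C k l p -> C k' l' q -> C (k + k') (l + l') (tensor p q)),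
      (forall k l m (p : prel k l) (q : prel l m),
          C k l p -> C l m q -> C k m (comp p q)) /\
      (forall k l (p : prel k l), C k l p -> C l k (star p)) &
      (forall k l,
        (forall p : prel k.+1 l, C k.+1 l p ->
            C k l.+1 (rotUL p) /\ C k l.+1 (rotUR p)) /\
        (forall p : prel k l.+1, C k l.+1 p ->
            C k.+1 l (rotLU p) /\ C k.+1 l (rotLR p)))].

Definition hyperoctahedral (C : pcat) : Prop :=
  [/\ is_category C, C 0 4 b4 & ~ C 0 2 dsingleton].

Definition simplifiable_hyperoctahedral (C : pcat) : Prop :=
  hyperoctahedral C /\ C 3 3 rho.

(* The group G = Z_2^{*oo}: letters a_i indexed by i : nat; elements   *)
(* are represented by reduced words (no two equal adjacent letters).   *)
(* The canonical surjection pi of the free group, on positive words,   *)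
(* is the reduction [red].                                             *)
Fixpoint red (s : seq nat) : seq nat :=
  match s with
  | [::] => [::]
  | x :: s' => match red s' with
               | y :: t => if x == y then t else x :: y :: t
               | [::] => [:: x]
               end
  end.

Definition reduced (s : seq nat) : bool := sorted (fun a b : nat => a != b) s.

Definition gmul (s t : seq nat) : seq nat := red (s ++ t).
Definition ginv (s : seq nat) : seq nat := rev s.

Definition inE_ (s : seq nat) : bool := reduced s && ~~ odd (size s).

Definition subgroup_of_E (H : seq nat -> Prop) : Prop :=
  [/\ (forall s, H s -> inE_ s), H [::],
      (forall s t, H s -> H t -> H (gmul s t)) &
      (forall s, H s -> H (ginv s))].

Definition proper_in_E (H : seq nat -> Prop) : Prop :=
  exists s, inE_ s /\ ~ H s.

Inductive S0 : (seq nat -> seq nat) -> Prop :=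
| S0_subst (n : nat) (sigma : nat -> nat) :
    (forall i, n <= i -> sigma i = i) -> S0 (fun s => red (map sigma s))
| S0_conj (i : nat) : S0 (fun s => red (i :: s ++ [:: i]))
| S0_comp f g : S0 f -> S0 g -> S0 (fun s => f (g s)).

Definition S0_invariant (H : seq nat -> Prop) : Prop :=
  forall phi, S0 phi -> forall s, H s -> H (phi s).

Definition is_labelling k l (p : prel k l) (lab : pt k l -> nat) : Prop :=
  forall x y, lab x = lab y <-> p (x, y).

Definition word k l (lab : pt k l -> nat) : seq nat :=
  [seq lab (inl i) | i <- enum 'I_k] ++ rev [seq lab (inr j) | j <- enum 'I_l].

Definition C_H (H : seq nat -> Prop) : pcat :=
  fun k l p => is_partition p /\
    exists lab : pt k l -> nat, is_labelling p lab /\ H (red (word lab)).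

(* Main.v *)
Require Import Defs.
From mathcomp Require Import all_boot.

Definition push (x : nat) (t : seq nat) :=
  if t is y :: t' then (if x == y then t' else x :: y :: t') else [:: x].

Lemma red_cons x s : red (x :: s) = push x (red s).
Proof. reflexivity. Qed.

Lemma reduced_push x t : reduced t -> reduced (push x t).
Proof.
case: t => [|y t] //= Ht.
case: eqP => [_|/eqP ne]; first by case: t Ht => //= z t /andP[].
by rewrite /= ne.
Qed.

Lemma reduced_red s : reduced (red s).
Proof. by elim: s => // x s IH; rewrite red_cons; exact: reduced_push. Qed.

Lemma red_reduced s : reduced s -> red s = s.
Proof.
elim: s => //= x s IH Hs.
have Hs' : reduced s by case: s Hs {IH} => //= y s /andP[].
rewrite (IH Hs'); case: s Hs {IH Hs'} => //= y s /andP[ne _].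
by rewrite (negbTE ne).
Qed.

Lemma red_red s : red (red s) = red s.
Proof. exact: red_reduced (reduced_red s). Qed.

Lemma push_push x t : reduced t -> push x (push x t) = t.
Proof.
case: t => [|y t]; first by rewrite /push eqxx.
case: (eqVneq x y) => [->|ne] Ht.
  rewrite /push eqxx.
  case: t Ht => [|z t] //=.
  by case/andP => ne _; rewrite (negbTE ne).
by rewrite /push (negbTE ne) eqxx.
Qed.

Lemma red_cat s t : red (s ++ t) = foldr push (red t) s.
Proof. by elim: s => //= x s ->. Qed.

Lemma reduced_foldr u s : reduced u -> reduced (foldr push u s).
Proof. by move=> Hu; elim: s => //= x s IH; exact: reduced_push. Qed.

Lemma foldr_push_red u s : reduced u -> foldr push u s = foldr push u (red s).
Proof.
move=> Hu; elim: s => //= x s ->.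
have Hr := reduced_red s.
move: (red s) Hr => v Hv.
rewrite /push; case: v Hv => [|y v] //= Hv.
case: eqP => [<-|_] //=.
have Hf : reduced (foldr push u v).
  apply: reduced_foldr Hu.
rewrite -/(push x _) -/(push x (push x _)).
by rewrite push_push.
Qed.

Lemma red_catl s t : red (s ++ t) = red (red s ++ t).
Proof. by rewrite !red_cat -foldr_push_red // reduced_red. Qed.

Lemma red_catr s t : red (s ++ t) = red (s ++ red t).
Proof. by rewrite !red_cat red_red. Qed.

Lemma red_xx a x b : red (a ++ x :: x :: b) = red (a ++ b).
Proof. by rewrite !red_cat !red_cons push_push // reduced_red. Qed.

Lemma red_cancel a u b : red (a ++ rev u ++ u ++ b) = red (a ++ b).
Proof.
elim: u a b => [|x u IH] a b //=.
by rewrite rev_cons -cats1 -!catA /= catA red_xx -catA IH.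
Qed.

Lemma reduced_rev s : reduced s -> reduced (rev s).
Proof.
rewrite /reduced rev_sorted.
by apply: sub_sorted => a b; rewrite eq_sym.
Qed.

Lemma red_rev_red s : red (rev s) = red (rev (red s)).
Proof.
elim: s => // x s IH.
rewrite rev_cons -cats1 red_catl IH -red_catl cats1 -rev_cons red_cons.
have Hr := reduced_red s; move: (red s) Hr => t Ht.
case: t Ht => [|y t] //= Ht.
rewrite /push; case: eqP => [<-|_] //.
by rewrite !rev_cons -!cats1 -catA /= -(cats0 (rev t ++ [:: x; x])) -catA red_xx cats0.
Qed.

Lemma red_rev s : red (rev s) = rev (red s).
Proof. by rewrite red_rev_red red_reduced // reduced_rev // reduced_red. Qed.

Lemma red_map f s : red (map f (red s)) = red (map f s).
Proof.
elim: s => // x s IH.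
rewrite red_cons [map f (x :: s)]/= red_cons -IH.
have Hr := reduced_red s; move: (red s) Hr => t Ht.
case: t Ht => [|y t] //= Ht.
rewrite /push; case: eqP => [<-|_] //.
rewrite -[match red _ with [::] => _ | _ :: _ => _ end]/(push (f x) (red [seq f i | i <- t])).
rewrite -/(push (f x) (push (f x) _)).
by rewrite push_push // reduced_red.
Qed.

Set Implicit Arguments. Unset Strict Implicit.

Lemma word_map k l (f : nat -> nat) (lab : pt k l -> nat) :
  map f (word lab) = word (fun x => f (lab x)).
Proof. by rewrite /word map_cat map_rev -!map_comp. Qed.

Lemma word_ext k l (f g : pt k l -> nat) :
  (forall x, f x = g x) -> word f = word g.
Proof. by move=> E; rewrite /word; congr (_ ++ rev _); apply: eq_map => x. Qed.

Lemma lab_part k l (p : prel k l) lab : is_labelling p lab -> is_partition p.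
Proof.
move=> Hl; apply/and3P; split.
- by apply/forallP => x; apply/Hl.
- apply/forallP => x; apply/forallP => y; apply/implyP => /Hl E; exact/Hl.
- apply/forallP => x; apply/forallP => y; apply/forallP => z.
  apply/implyP => /Hl E1; apply/implyP => /Hl E2; apply/Hl; by rewrite E1.
Qed.

Lemma relabel (H : seq nat -> Prop) (HS : S0_invariant H) k l
  (lab g : pt k l -> nat) :
  H (red (word lab)) -> (forall x y, lab x = lab y -> g x = g y) ->
  H (red (word g)).
Proof.
move=> Hw Hg.
pose n := \max_(x : pt k l) (lab x).+1.
pose sigma c := if [pick x | lab x == c] is Some x then g x else c.
have Hs : forall i, n <= i -> sigma i = i.
  move=> i Hi; rewrite /sigma; case: pickP => // x /eqP Hx.
  have H1 : (lab x).+1 <= n by exact: (leq_bigmax x).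
  rewrite Hx in H1.
  by have := leq_trans H1 Hi; rewrite ltnn.
have := HS _ (S0_subst Hs) _ Hw.
rewrite red_map word_map (@word_ext _ _ _ g) //.
move=> x; rewrite /sigma; case: pickP => [y /eqP /Hg //|/(_ x)].
by rewrite eqxx.
Qed.

Lemma H_conj (H : seq nat -> Prop) (HS : S0_invariant H) u w :
  H (red w) -> H (red (u ++ w ++ rev u)).
Proof.
elim: u => [|x u IH] Hw; first by rewrite /= cats0.
have := HS _ (S0_conj x) _ (IH Hw).
rewrite red_cons -red_catl -red_cons.
by rewrite rev_cons -cats1 !catA.
Qed.

Lemma H_mul (H : seq nat -> Prop) (Hsub : subgroup_of_E H) a b :
  H (red a) -> H (red b) -> H (red (a ++ b)).
Proof.
case: Hsub => _ _ Hm _ Ha Hb.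
by have := Hm _ _ Ha Hb; rewrite /gmul -red_catl -red_catr.
Qed.

Lemma H_all (H : seq nat -> Prop) (Hsub : subgroup_of_E H) (HS : S0_invariant H)
  a b : a != b -> H [:: b; a] -> forall s, inE_ s -> H s.
Proof.
move=> ab Hba.
have Hxy : forall x y, x != y -> H [:: x; y].
  move=> x y xy.
  pose sigma c := if c == b then x else if c == a then y else c.
  have Hs : forall i, (maxn a b).+1 <= i -> sigma i = i.
    move=> i Hi; rewrite /sigma.
    have : b < i by apply: leq_trans Hi; rewrite ltnS leq_maxr.
    have : a < i by apply: leq_trans Hi; rewrite ltnS leq_maxl.
    by move=> ha hb; rewrite (gtn_eqF hb) (gtn_eqF ha).
  have := HS _ (S0_subst Hs) _ Hba.
  rewrite /= /sigma eqxx eq_sym (negbTE ab) eqxx.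
  by rewrite eq_sym (negbTE xy).
suff : forall n s, size s = n.*2 -> reduced s -> H s.
  move=> Hn s /andP[rs es]; apply: (Hn (size s)./2) => //.
  by rewrite -{1}(odd_double_half (size s)) (negbTE es).
elim=> [|n IH] [|x [|y s]] //=.
- by move=> _ _; case: Hsub.
rewrite doubleS => -[Hs] /andP[xy ps].
have rs : reduced s by case: s ps {Hs} => //= z s /andP[].
have H1 : H (red [:: x; y]) by rewrite red_reduced /= ?xy //; exact: Hxy.
have H2 : H (red s) by rewrite red_reduced //; exact: IH.
have := H_mul Hsub H1 H2.
by rewrite red_reduced //= xy.
Qed.

Set Implicit Arguments. Unset Strict Implicit.

Lemma map_enum_val T n (f : nat -> T) :
  [seq f (val i) | i <- enum 'I_n] = map f (iota 0 n).
Proof. by rewrite (map_comp f val) val_enum_ord. Qed.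
Arguments map_enum_val {T n} f.

Lemma map_const0 (s : seq nat) : map (fun _ => 0) s = nseq (size s) 0.
Proof. by elim: s => //= x s ->. Qed.

Lemma word_const k l : word (fun _ : pt k l => 0) = nseq (k + l) 0.
Proof.
rewrite /word !(map_comp (fun _ => 0) val) !val_enum_ord.
by rewrite !map_const0 !size_iota rev_nseq nseqD.
Qed.

Lemma const_lab k l (p : prel k l) : (forall x, p x = true) -> is_labelling p (fun _ => 0).
Proof. by move=> h x y; rewrite h. Qed.

Lemma rho_word : red (word rho_cls) = [::].
Proof.
rewrite /word /rho_cls.
rewrite (map_enum_val (fun v => if v == 2 then 1 else 0)).
rewrite (map_enum_val (fun v => if v == 0 then 1 else 0)).
by [].
Qed.

Lemma mapmap (A B C : Type) (f : B -> C) (g : A -> B) s :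
  map f (map g s) = map (fun x => f (g x)) s.
Proof. by elim: s => //= x s ->. Qed.

Lemma enum_add m n :
  enum 'I_(m + n) = map (@lshift m n) (enum 'I_m) ++ map (@rshift m n) (enum 'I_n).
Proof.
apply: (inj_map (@ord_inj (m + n))); rewrite map_cat.
transitivity (iota 0 (m + n)); first exact: (val_enum_ord (m + n)).
rewrite iotaD; congr (_ ++ _).
  by rewrite -(val_enum_ord m); elim: (enum 'I_m) => //= a s ->.
have -> : iota m n = map (addn m) (iota 0 n) by rewrite -iotaDl addn0.
rewrite -(val_enum_ord n).
by elim: (enum 'I_n) => //= a s ->.
Qed.

Lemma map_cat_shift m n (f : 'I_(m + n) -> nat) :
  [seq f i | i <- enum 'I_(m + n)] =
  [seq f (lshift n i) | i <- enum 'I_m] ++ [seq f (rshift m i) | i <- enum 'I_n].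
Proof.
rewrite enum_add map_cat.
by congr (_ ++ _); elim: (enum _) => //= ? ? ->.
Qed.

Lemma split_lshift m n (a : 'I_m) : split (@lshift m n a) = inl a.
Proof. exact: (unsplitK (inl a)). Qed.
Lemma split_rshift m n (a : 'I_n) : split (@rshift m n a) = inr a.
Proof. exact: (unsplitK (inr a)). Qed.

Lemma tensor_closed H (Hsub : subgroup_of_E H) (HS : S0_invariant H)
  k l k' l' (p : prel k l) (q : prel k' l') :
  C_H H p -> C_H H q -> C_H H (tensor p q).
Proof.
move=> [_ [lp [Lp Hp]]] [_ [lq [Lq Hq]]].
pose M := \max_(x : pt k l) (lp x).+1.
have ltM : forall x, lp x < M by move=> x; exact: (leq_bigmax x).
pose g y := lq y + M.
have Hg : H (red (word g)) by apply: (relabel HS Hq) => x y; rewrite /g => ->.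
pose labT (x : pt (k + k') (l + l')) :=
  match tsplit x with inl a => lp a | inr b => g b end.
have LT : is_labelling (tensor p q) labT.
  move=> x y; rewrite ffunE /labT /=.
  case: (tsplit x) => a; case: (tsplit y) => b.
  - exact: Lp.
  - split=> // E; have := ltM a; rewrite E /g.
    by rewrite ltnNge leq_addl.
  - split=> // E; have := ltM b; rewrite -E /g.
    by rewrite ltnNge leq_addl.
  - rewrite /g; split=> [/eqP|/Lq -> //].
    by rewrite eqn_add2r => /eqP /Lq.
split; first exact: lab_part LT.
exists labT; split=> //.
have -> : word labT = [seq lp (inl i) | i <- enum 'I_k] ++
   ([seq g (inl i) | i <- enum 'I_k'] ++ rev [seq g (inr i) | i <- enum 'I_l'])
   ++ rev [seq lp (inr i) | i <- enum 'I_l].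
  rewrite /word !map_cat_shift rev_cat !catA.
  congr (((_ ++ _) ++ rev _) ++ rev _).
  - by apply: eq_map => a; rewrite /= /labT /= split_lshift.
  - by apply: eq_map => a; rewrite /= /labT /= split_rshift.
  - by apply: eq_map => a; rewrite /= /labT /= split_rshift.
  - by apply: eq_map => a; rewrite /= /labT /= split_lshift.
set Up := [seq lp (inl i) | i <- enum 'I_k].
set Wq := (_ ++ rev _) in Hg *.
have := H_mul Hsub (H_conj HS Up Hg) Hp.
rewrite /word -/Up -!catA /Wq.
set B := [seq g (inl i) | i <- enum 'I_k'].
set C := rev [seq g (inr j) | j <- enum 'I_l'].
set D := rev [seq lp (inr j) | j <- enum 'I_l].
have E := red_cancel (Up ++ B ++ C) Up D; rewrite -!catA in E.
by rewrite E -!catA.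
Qed.

Lemma lab_sym k l (p : prel k l) lab : is_labelling p lab ->
  forall x y, p (x, y) = p (y, x).
Proof. by move=> L x y; apply/idP/idP => /L E; apply/L. Qed.

Definition bot_inj k l m (y : pt l m) : cpt k l m :=
  match y with inl j => inl (inr j) | inr t => inr t end.

Lemma comp_closed H (Hsub : subgroup_of_E H) (HS : S0_invariant H)
  k l m (p : prel k l) (q : prel l m) :
  C_H H p -> C_H H q -> C_H H (Defs.comp p q).
Proof.
move=> [_ [lp [Lp Hp]]] [_ [lq [Lq Hq]]].
pose e := c_edge p q.
have esym : symmetric e.
  move=> u v; rewrite /e /c_edge.
  case: (c_top u) => [x|]; case: (c_top v) => [y|]; rewrite ?(lab_sym Lp x y) //;
  case: (c_bot u) => [x'|]; case: (c_bot v) => [y'|]; rewrite ?(lab_sym Lq x' y') //.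
have csym := sym_connect_sym esym.
pose r u := find (connect e u) (enum (cpt k l m)).
have rP : forall u v, r u = r v <-> connect e u v.
  move=> u v; split.
  - move=> E.
    have hu : has (connect e u) (enum (cpt k l m)).
      by apply/hasP; exists u; rewrite ?mem_enum ?connect0.
    have hv : has (connect e v) (enum (cpt k l m)).
      by apply/hasP; exists v; rewrite ?mem_enum ?connect0.
    have := nth_find u hu; have := nth_find u hv.
    rewrite -/(r u) -/(r v) -E => cv cu.
    by apply: connect_trans cu _; rewrite csym.
  - move=> cuv; rewrite /r; apply: eq_find => w.
    apply/idP/idP => h.
      by apply: connect_trans h; rewrite csym.
    exact: connect_trans cuv h.
pose labC (x : pt k m) := r (@c_out k l m x).
have LC : is_labelling (Defs.comp p q) labC.
  by move=> x y; rewrite ffunE; exact: rP.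
split; first exact: lab_part LC.
exists labC; split => //.
have H1 : H (red (word (fun x => r (inl x)))).
  apply: (relabel HS Hp) => x y /Lp pxy; apply/rP; apply: connect1.
  by rewrite /e /c_edge /= pxy.
have cb : forall y, c_bot (@bot_inj k l m y) = Some y by case.
have H2 : H (red (word (fun y => r (@bot_inj k l m y)))).
  apply: (relabel HS Hq) => x y /Lq qxy; apply/rP; apply: connect1.
  by rewrite /e /c_edge !cb qxy orbT.
have := H_mul Hsub H1 H2.
rewrite /word -catA red_cancel.
by [].
Qed.

Lemma pullback_lab k l k' l' (f : pt k' l' -> pt k l) (p : prel k l) lab :
  is_labelling p lab -> is_labelling (pullback f p) (fun x => lab (f x)).
Proof. by move=> L x y; rewrite ffunE; exact: L. Qed.

Lemma star_closed H (Hsub : subgroup_of_E H) k l (p : prel k l) :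
  C_H H p -> C_H H (star p).
Proof.
move=> [_ [lab [L Hw]]].
have L' := pullback_lab (@swap_pt k l) L.
split; first exact: lab_part L'.
exists (fun x => lab (swap_pt x)); split => //.
case: Hsub => _ _ _ Hi.
have := Hi _ Hw; rewrite /ginv -red_rev /word rev_cat revK.
by [].
Qed.

Lemma H_rotl H (HS : S0_invariant H) x w : H (red (x :: w)) -> H (red (w ++ [:: x])).
Proof.
move=> Hw; have := HS _ (S0_conj x) _ Hw.
by rewrite red_cons -red_catl -red_cons -[x :: x :: _]/([::] ++ x :: x :: _) red_xx.
Qed.

Lemma H_rotr H (HS : S0_invariant H) x w : H (red (w ++ [:: x])) -> H (red (x :: w)).
Proof.
move=> Hw; have := HS _ (S0_conj x) _ Hw.
rewrite red_cons -red_catl -catA.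
rewrite cat1s (red_xx w x [::]) cats0.
by rewrite -red_cons.
Qed.

Lemma mapSl T n (f : 'I_n.+1 -> T) :
  [seq f i | i <- enum 'I_n.+1] = f ord0 :: [seq f (lift ord0 i) | i <- enum 'I_n].
Proof. by rewrite enum_ordSl /=; congr (_ :: _); elim: (enum _) => //= ? ? ->. Qed.

Lemma mapSr T n (f : 'I_n.+1 -> T) :
  [seq f i | i <- enum 'I_n.+1] = rcons [seq f (lift ord_max i) | i <- enum 'I_n] (f ord_max).
Proof.
rewrite enum_ordSr map_rcons; congr (rcons _ _).
elim: (enum _) => //= i s ->; congr (f _ :: _).
by apply: val_inj; rewrite [RHS]lift_max.
Qed.

Lemma rot_closed H (HS : S0_invariant H) k l :
  (forall p : prel k.+1 l, C_H H p -> C_H H (rotUL p) /\ C_H H (rotUR p)) /\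
  (forall p : prel k l.+1, C_H H p -> C_H H (rotLU p) /\ C_H H (rotLR p)).
Proof.
split=> p [_ [lab [L Hw]]]; split.
- have L' := pullback_lab (@rotUL_map k l) L.
  split; first exact: lab_part L'.
  exists (fun x => lab (rotUL_map x)); split => //.
  have E1 : [seq lab (rotUL_map (inr j)) | j <- enum 'I_l.+1] =
            lab (inl ord0) :: [seq lab (inr j) | j <- enum 'I_l].
    by rewrite mapSl /= unlift_none; congr (_ :: _); apply: eq_map => j /=; rewrite liftK.
  move: Hw; rewrite /word mapSl cat_cons => /(H_rotl HS).
  by rewrite E1 rev_cons -cats1 catA.
- have L' := pullback_lab (@rotUR_map k l) L.
  split; first exact: lab_part L'.
  exists (fun x => lab (rotUR_map x)); split => //.
  have E1 : [seq lab (rotUR_map (inr j)) | j <- enum 'I_l.+1] =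
            rcons [seq lab (inr j) | j <- enum 'I_l] (lab (inl ord_max)).
    by rewrite mapSr /= unlift_none; congr (rcons _ _); apply: eq_map => j /=; rewrite liftK.
  move: Hw; rewrite /word mapSr cat_rcons.
  by rewrite E1 rev_rcons.
- have L' := pullback_lab (@rotLU_map k l) L.
  split; first exact: lab_part L'.
  exists (fun x => lab (rotLU_map x)); split => //.
  have E1 : [seq lab (rotLU_map (inl j)) | j <- enum 'I_k.+1] =
            lab (inr ord0) :: [seq lab (inl j) | j <- enum 'I_k].
    by rewrite mapSl /= unlift_none; congr (_ :: _); apply: eq_map => j /=; rewrite liftK.
  move: Hw; rewrite /word mapSl rev_cons -cats1 catA => /(H_rotr HS).
  by rewrite E1 cat_cons.
- have L' := pullback_lab (@rotLR_map k l) L.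
  split; first exact: lab_part L'.
  exists (fun x => lab (rotLR_map x)); split => //.
  have E1 : [seq lab (rotLR_map (inl j)) | j <- enum 'I_k.+1] =
            rcons [seq lab (inl j) | j <- enum 'I_k] (lab (inr ord_max)).
    by rewrite mapSr /= unlift_none; congr (rcons _ _); apply: eq_map => j /=; rewrite liftK.
  move: Hw; rewrite /word mapSr rev_rcons.
  by rewrite E1 cat_rcons.
Qed.

Lemma enum0 : enum 'I_0 = [::].
Proof. by apply: size0nil; rewrite size_enum_ord. Qed.

Lemma const_C H (Hnil : H [::]) k l (p : prel k l) : (forall x, p x = true) ->
  ~~ odd (k + l) -> C_H H p.
Proof.
move=> hp ev; have L := const_lab hp.
split; first exact: lab_part L.
exists (fun _ => 0); split => //.
rewrite word_const -(odd_double_half (k + l)) (negbTE ev) add0n.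
elim: (k + l)./2 => // n.
by rewrite doubleS -[nseq n.*2.+2 0]/([::] ++ 0 :: 0 :: nseq n.*2 0) red_xx.
Qed.

Unset Implicit Arguments.
Set Strict Implicit.

Theorem mainTheorem7 (H : seq nat -> Prop) :
  subgroup_of_E H -> proper_in_E H -> S0_invariant H ->
  simplifiable_hyperoctahedral (C_H H).
Proof.
move=> Hsub Hprop HS.
have Hnil : H [::] by case: Hsub.
split; [split; [split|..]|].
- by move=> k l p [].
- by split; apply: const_C => // x; rewrite ffunE.
- by move=> k l k' l' p q; apply: tensor_closed.
- split; first by move=> k l m p q; apply: comp_closed.
  by move=> k l p; apply: star_closed.
- by move=> k l; apply: rot_closed.
- by apply: const_C => // x; rewrite ffunE.
- move=> [_ [lab [L Hw]]].
  set a := lab (inr ord0); set b := lab (inr (lift ord0 ord0)).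
  have ab : a != b.
    apply/eqP => /L; rewrite ffunE /=.
    by [].
  move: Hw; rewrite /word mapSl mapSl !enum0 /= -/a -/b.
  rewrite eq_sym (negbTE ab).
  move=> Hba; case: Hprop => s [Es nHs]; apply: nHs.
  exact: (H_all Hsub HS ab Hba Es).
- have L : is_labelling rho rho_cls.
    by move=> x y; rewrite ffunE /=; split => [->|/eqP].
  split; first exact: lab_part L.
  by exists rho_cls; split => //; rewrite rho_word.
Qed.
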